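(* Let $L$ be a (right) Leibniz algebra, let $k\geq 1$ be an integer and let $B$ be an ideal of $L$ which is $\mathrm{Es}_k$-right nil. Let $P$ be a product of elements of $L$ (arbitrary bracketing) having at least $t$ factors in $B$, where $t\geq 4k^2-2k+1$. Then $P$ is a finite linear combination $P=\sum_j\mu_jQ_j$ ($\mu_j\in F$) of right products $Q_j$ of elements of $L$ such that, for each $j$, either $Q_j\in (B^k)_{(L,k)}$ or $Q_j$ has at least one factor belonging to $(B^k)_{(L,k)}$.
   Context: A (right) Leibniz algebra is a vector space $L$ over a field $F$ (characteristic $\neq 2$, finite-dimensional) with a bilinear product $(x,y)\mapsto xy$ satisfying $x(yz)=(xy)z-(xz)y$. For subspaces $U,V$, $UV$ is the span of all $uv$; right powers $B^1=B$, $B^{j+1}=B^jB$. An ideal is a subspace $B$ with $LB\subseteq B$, $BL\subseteq B$. Right product: $s_p\cdots s_1:=((\cdots((s_ps_{p-1})s_{p-2})\cdots)s_2)s_1$, with factors $s_1,\dots,s_p$. For a subspace $D\subseteq L$ and $k\geq 1$, $D_{(L,k)}$ is the span of all right products $d\,x_k\cdots x_1$ with $d\in D$, $x_i\in L$. $\mathrm{Ess}(L)$ is the ideal generated by all squares $xx$, and $\mathrm{Es}(B)=B\cap\mathrm{Ess}(L)$. A nonzero ideal $B$ is $\mathrm{Es}_k$-right nil if $\mathrm{Es}(B)_{(L,k)}=\{0\}$. *)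

(* Defs.v *)
From HB Require Import structures.
From mathcomp Require Import all_boot all_order all_algebra.
Set Implicit Arguments. Unset Strict Implicit. Unset Printing Implicit Defensive.
Import GRing.Theory.
Local Open Scope ring_scope.

Section Leibniz.
Variables (F : fieldType) (L : vectType F) (mul : L -> L -> L).

Definition bilinear_mul : Prop :=
  (forall (a : F) (x y z : L), mul (a *: x + y) z = a *: mul x z + mul y z) /\
  (forall (a : F) (x y z : L), mul z (a *: x + y) = a *: mul z x + mul z y).

Definition right_leibniz : Prop :=
  forall x y z : L, mul x (mul y z) = mul (mul x y) z - mul (mul x z) y.

Definition spanP (S : L -> Prop) (x : L) : Prop :=
  exists (n : nat) (c : 'I_n -> F) (v : 'I_n -> L),
    (forall i, S (v i)) /\ x = \sum_(i < n) c i *: v i.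

Definition prodsp (U V : L -> Prop) : L -> Prop :=
  spanP (fun x => exists u v, U u /\ V v /\ x = mul u v).

(* Right product s_p ... s_1 = ((s_p s_{p-1}) ...) s_1, encoded as
   (s_p, [:: s_{p-1}; ...; s_1]); its factors are s_p :: [:: s_{p-1}; ...]. *)
Definition rprod (q : L * seq L) : L := foldl mul q.1 q.2.
Definition rfactors (q : L * seq L) : seq L := q.1 :: q.2.

(* Right powers: rpow B 1 = B, rpow B (j+1) = (rpow B j) B. *)
Fixpoint rpow_aux (B : L -> Prop) (n : nat) : L -> Prop :=
  match n with
  | 0 => B
  | n'.+1 => prodsp (rpow_aux B n') B
  end.
Definition rpow (B : L -> Prop) (j : nat) : L -> Prop := rpow_aux B j.-1.

Definition DLk (D : L -> Prop) (k : nat) : L -> Prop :=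
  spanP (fun y => exists d (xs : seq L), D d /\ size xs = k /\ y = rprod (d, xs)).

Definition is_ideal (B : {vspace L}) : Prop :=
  forall x b : L, b \in B -> (mul x b \in B) /\ (mul b x \in B).

(* Ess(L): the ideal generated by all squares x x. *)
Definition Ess (x : L) : Prop :=
  forall I : {vspace L}, is_ideal I -> (forall y, mul y y \in I) -> x \in I.

Definition Es (B : {vspace L}) (x : L) : Prop := x \in B /\ Ess x.

Definition Es_right_nil (k : nat) (B : {vspace L}) : Prop :=
  B != 0%VS /\ (forall x, DLk (Es B) k x -> x = 0).

End Leibniz.

(* Products with arbitrary bracketing: binary trees with leaves in L. *)
Inductive btree (T : Type) : Type :=
  | Leaf of T
  | Node of btree T & btree T.
Arguments Leaf {T} _.
Arguments Node {T} _ _.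

Fixpoint beval (T : Type) (mul : T -> T -> T) (P : btree T) : T :=
  match P with
  | Leaf x => x
  | Node P1 P2 => mul (beval mul P1) (beval mul P2)
  end.

Fixpoint bleaves (T : Type) (P : btree T) : seq T :=
  match P with
  | Leaf x => [:: x]
  | Node P1 P2 => bleaves P1 ++ bleaves P2
  end.

(* Main.v *)
Require Import Defs.
From HB Require Import structures.
From mathcomp Require Import all_boot all_order all_algebra.
From mathcomp Require Import zify.
Import GRing.Theory.
Local Open Scope ring_scope.

Inductive Ispan {F : fieldType} {L : vectType F} (S : L -> Prop) : L -> Prop :=
  | Isp0 : Ispan S 0
  | IspG v : S v -> Ispan S v
  | IspL (a : F) x y : Ispan S x -> Ispan S y -> Ispan S (a *: x + y).

Lemma spanP_lin (F : fieldType) (L : vectType F) (S : L -> Prop) (a : F) x y :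
  spanP S x -> spanP S y -> spanP S (a *: x + y).
Proof.
move=> [n1 [c1 [v1 [h1 ->]]]] [n2 [c2 [v2 [h2 ->]]]].
exists (n1 + n2)%N.
exists (fun i => match split i with inl i => a * c1 i | inr j => c2 j end).
exists (fun i => match split i with inl i => v1 i | inr j => v2 j end).
split.
  by move=> i; case: (split i).
rewrite big_split_ord /= scaler_sumr; congr (_ + _); apply: eq_bigr => i _.
  by rewrite /lshift -[Ordinal _]/(unsplit (inl i)) unsplitK scalerA.
by rewrite -[rshift _ _]/(unsplit (inr i)) unsplitK.
Qed.

Lemma Ispan_spanP (F : fieldType) (L : vectType F) (S : L -> Prop) v :
  Ispan S v <-> spanP S v.
Proof.
split.
  elim=> [|w Sw|a x y _ hx _ hy].
  - by exists 0%N, (fun _ => 0), (fun _ => 0); split=> [[]//|]; rewrite big_ord0.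
  - exists 1%N, (fun _ => 1), (fun _ => w); split=> // .
    by rewrite big_ord1 scale1r.
  - exact: spanP_lin.
move=> [n [c [w [hw ->]]]]; elim: n c w hw => [|n IH] c w hw.
  by rewrite big_ord0; apply: Isp0.
rewrite big_ord_recr /= addrC; apply: IspL; first by apply: IspG.
by apply: IH.
Qed.

Lemma Ispan_map (F : fieldType) (L : vectType F) (S S' : L -> Prop) (f : L -> L) v :
  f 0 = 0 -> (forall a x y, f (a *: x + y) = a *: f x + f y) ->
  (forall s, S s -> Ispan S' (f s)) -> Ispan S v -> Ispan S' (f v).
Proof.
move=> f0 flin hS; elim=> [|w Sw|a x y _ hx _ hy].
- by rewrite f0; apply: Isp0.
- exact: hS.
- by rewrite flin; apply: IspL.
Qed.

Arguments Ispan_map {F L S S'} f {v}.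

Lemma Ispan_mono (F : fieldType) (L : vectType F) (S S' : L -> Prop) v :
  (forall s, S s -> S' s) -> Ispan S v -> Ispan S' v.
Proof.
move=> h; elim=> [|w Sw|a x y _ hx _ hy]; [exact: Isp0|by apply: IspG; apply: h|].
exact: IspL.
Qed.

Arguments Ispan_mono {F L S S' v}.

Lemma mul0l (F : fieldType) (L : vectType F) (mul : L -> L -> L) :
  bilinear_mul mul -> forall z, mul 0 z = 0.
Proof.
move=> [h1 _] z; have := h1 1 0 0 z; rewrite !scale1r !addr0.
by move=> /(congr1 (fun w => w - mul 0 z)) /=; rewrite subrr addrK => <-.
Qed.

Lemma rpow_right (F : fieldType) (L : vectType F) (mul : L -> L -> L)
  (hbil : bilinear_mul mul) (hleib : right_leibniz mul) (B : {vspace L})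
  (hideal : is_ideal mul B) j u x :
  rpow_aux mul (fun x => x \in B) j u -> rpow_aux mul (fun x => x \in B) j (mul u x).
Proof.
elim: j u => [|j IH] u /=; first by move=> hu; case: (hideal x u hu).
move=> /Ispan_spanP hu; apply/Ispan_spanP.
apply: (Ispan_map (fun u => mul u x)) hu.
- exact: mul0l.
- by move=> a y z; case: hbil => h1 _; rewrite h1.
move=> s [u' [b [hu' [hb ->]]]].
have -> : mul (mul u' b) x = 1 *: mul u' (mul b x) + mul (mul u' x) b.
  by rewrite scale1r hleib subrK.
apply: IspL; apply: IspG.
  exists u', (mul b x); split=> //; split=> //; by case: (hideal x b hb).
by exists (mul u' x), b; split=> //; apply: IH.
Qed.

Lemma rpow_count (F : fieldType) (L : vectType F) (mul : L -> L -> L)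
  (hbil : bilinear_mul mul) (hleib : right_leibniz mul) (B : {vspace L})
  (hideal : is_ideal mul B) a ws j :
  (1 <= j)%N -> (j <= count (fun x => x \in B) (a :: ws))%N ->
  rpow_aux mul (fun x => x \in B) j.-1 (rprod mul (a, ws)).
Proof.
elim/last_ind: ws j => [|ws x IH] j hj.
  rewrite /= addn0 => hj1.
  have ej : j = 1%N by apply/eqP; rewrite eqn_leq hj andbT; exact: (leq_trans hj1 (leq_b1 _)).
  by rewrite ej in hj1 *; rewrite /rprod /=; case: (a \in B) hj1.
rewrite -cats1 -cat_cons count_cat /= addn0 /rprod /= foldl_cat /= -/(rprod mul (a, ws)) => hc.
have [hle|hlt] := leqP j (count (fun x => x \in B) (a :: ws)).
  by apply: rpow_right => //; apply: IH.
have hxB : x \in B.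
  apply: contraLR hlt => hx; rewrite -leqNgt; move: hc; rewrite (negbTE hx) addn0 //.
rewrite hxB /= in hc.
have ej : j = (count (fun x => x \in B) (a :: ws)).+1.
  by apply/eqP; rewrite eqn_leq hlt -addn1 hc.
move: hlt hc; rewrite ej => _ _.
case ec: (count (fun x => x \in B) (a :: ws)) => [|c] /=.
  by case: (hideal (rprod mul (a, ws)) x hxB).
apply/Ispan_spanP; apply: IspG; exists (rprod mul (a, ws)), x; split=> //.
by have := IH c.+1 isT; rewrite ec leqnn => /(_ isT).
Qed.

Definition Gc (F : fieldType) (L : vectType F) (B : {vspace L}) (mul : L -> L -> L) (c : nat) :=
  fun v => exists q, (c <= count (fun x => x \in B) (rfactors q))%N /\ v = rprod mul q.

Arguments Gc {F L}.

Lemma lemA (F : fieldType) (L : vectType F) (mul : L -> L -> L)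
  (hbil : bilinear_mul mul) (hleib : right_leibniz mul) (B : {vspace L}) P2 :
  forall u, Ispan (fun v => exists xs, (count (fun x => x \in B) (bleaves P2) <= count (fun x => x \in B) xs)%N
                      /\ v = rprod mul (u, xs)) (mul u (beval mul P2)).
Proof.
have lin : forall z a x y, mul (a *: x + y) z = a *: mul x z + mul y z.
  by move=> z a x y; case: hbil => h1 _; rewrite h1.
elim: P2 => [x|P21 IH1 P22 IH2] u /=.
  by apply: IspG; exists [:: x]; split.
have -> : mul u (mul (beval mul P21) (beval mul P22)) =
   (-1) *: mul (mul u (beval mul P22)) (beval mul P21) + mul (mul u (beval mul P21)) (beval mul P22).
  by rewrite hleib scaleN1r addrC.
rewrite count_cat.
apply: IspL.
  apply: (Ispan_map (fun w => mul w (beval mul P21))) (IH2 u).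
  - exact: mul0l.
  - exact: lin.
  move=> s [xs [hxs ->]].
  apply: Ispan_mono (IH1 (rprod mul (u, xs))) => w [ys [hys ->]].
  exists (xs ++ ys); rewrite count_cat /rprod foldl_cat; split=> //.
  by rewrite addnC leq_add.
apply: (Ispan_map (fun w => mul w (beval mul P22))) (IH1 u).
- exact: mul0l.
- exact: lin.
move=> s [xs [hxs ->]].
apply: Ispan_mono (IH2 (rprod mul (u, xs))) => w [ys [hys ->]].
exists (xs ++ ys); rewrite count_cat /rprod foldl_cat; split=> //.
by rewrite leq_add.
Qed.

Arguments lemA {F L mul}.

Lemma lemM (F : fieldType) (L : vectType F) (mul : L -> L -> L)
  (hbil : bilinear_mul mul) (hleib : right_leibniz mul) (B : {vspace L}) P :
  Ispan (Gc B mul (count (fun x => x \in B) (bleaves P))) (beval mul P).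
Proof.
elim: P => [x|P1 IH1 P2 IH2] /=.
  by apply: IspG; exists (x, [::]).
apply: (Ispan_map (fun w => mul w (beval mul P2))) IH1.
- exact: mul0l.
- by move=> a x y; case: hbil => h1 _; rewrite h1.
move=> s [q [hq ->]].
apply: Ispan_mono (lemA hbil hleib B P2 (rprod mul q)) => w [xs [hxs ->]].
exists (q.1, q.2 ++ xs); rewrite /rprod foldl_cat; split=> //.
move: hq; rewrite /rfactors /= count_cat => hq.
rewrite count_cat addnA; exact: leq_add.
Qed.

Lemma lemK (F : fieldType) (L : vectType F) (mul : L -> L -> L)
  (hbil : bilinear_mul mul) (hleib : right_leibniz mul) (B : {vspace L})
  (hideal : is_ideal mul B) k (hk : (1 <= k)%N) v :
  Gc B mul (2 * k) v ->
  exists d (xs : seq L), rpow mul (fun x => x \in B) k d /\ size xs = k /\ v = rprod mul (d, xs).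
Proof.
move=> [[a zs] [hc ->]].
set m := (size zs - k)%N.
have hsz : (k <= size zs)%N.
  have := count_size (fun x => x \in B) (a :: zs); rewrite /rfactors /= in hc *.
  move=> h; have := leq_trans hc h; rewrite mul2n -addnn -addn1 => h2.
  by rewrite -(leq_add2r k); apply: leq_trans h2 _; rewrite leq_add2l.
exists (rprod mul (a, take m zs)), (drop m zs).
have hsd : size (drop m zs) = k by rewrite size_drop /m subKn.
split; last split => //.
  apply: rpow_count => //.
  move: hc; rewrite /rfactors /= -{1}(cat_take_drop m zs) count_cat addnA => hc.
  rewrite -(leq_add2r k) addnn -mul2n; apply: leq_trans hc _.
  by rewrite leq_add2l -hsd count_size.
by rewrite /rprod /= -foldl_cat cat_take_drop.
Qed.

Theorem lemma4p4 (F : fieldType) (L : vectType F) (mul : L -> L -> L)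
  (hchar : (2%:R : F) != 0)
  (hbil : bilinear_mul mul) (hleib : right_leibniz mul)
  (k : nat) (hk : (1 <= k)%N)
  (B : {vspace L}) (hideal : is_ideal mul B) (hnil : Es_right_nil mul k B)
  (t : nat) (ht : (4 * k ^ 2 - 2 * k + 1 <= t)%N)
  (P : btree L) (hP : (t <= count (fun x => x \in B) (bleaves P))%N) :
  let T := DLk mul (rpow mul (fun x => x \in B) k) k in
  exists (n : nat) (mu : 'I_n -> F) (Q : 'I_n -> L * seq L),
    beval mul P = \sum_(j < n) mu j *: rprod mul (Q j) /\
    (forall j, T (rprod mul (Q j)) \/ exists2 x, x \in rfactors (Q j) & T x).
Proof.
move=> T.
exists 1%N, (fun _ => 1), (fun _ => (beval mul P, [::])).
split; first by rewrite big_ord1 scale1r.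
move=> _; left; rewrite /T /DLk /=.
apply/Ispan_spanP; rewrite /rprod /=.
apply: (Ispan_mono _ (lemM _ _ _ hbil hleib B P)) => v hv.
apply: lemK => //.
case: hv => q [hq ->]; exists q; split => //.
apply: leq_trans hq; apply: leq_trans hP; apply: leq_trans ht.
nia.
Qed.
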